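(* Let $\mathbb{P}: M_2 \to M_2$ be the linear map $$\mathbb{P}\begin{pmatrix} x_{11} & x_{12} \\ x_{21} & x_{22}\end{pmatrix} = \begin{pmatrix} \frac{x_{11}+x_{22}}{2} & x_{12} \\ x_{21} & \frac{x_{11}+x_{22}}{2}\end{pmatrix}.$$ For a constant $\kappa_3$, define the linear map $\Phi_3$ on operators on $\mathbb{C}^2\otimes\mathbb{C}^2\otimes\mathbb{C}^2$ by $$\Phi_3(\varrho) = (\mathbb{P}\otimes\mathbb{I}\otimes\mathbb{I})(\varrho) + (\mathbb{I}\otimes\mathbb{P}\otimes\mathbb{I})(\varrho) + (\mathbb{I}\otimes\mathbb{I}\otimes\mathbb{P})(\varrho) + \kappa_3\, \mathrm{Tr}(\varrho)\, I,$$ where $\mathbb{I}$ is the identity map on $M_2$ and $I$ is the $8\times 8$ identity matrix. If $\kappa_3=\frac12$, then $\Phi_3(\rho)\ge 0$ for every biseparable three-qubit state $\rho$.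
   Context: A three-qubit state $\rho$ is biseparable if it can be written as $\rho = p_1\,\rho_1\otimes\rho_{23} + p_2\,\rho_2\otimes\rho_{13} + p_3\,\rho_3\otimes\rho_{12}$ (each term being a convex combination of product states across the indicated bipartition $1|23$, $2|13$, $3|12$ respectively, with the tensor factors placed on the indicated qubits), where $p_i\ge 0$, $\sum_i p_i=1$, and $\rho_i$, $\rho_{jk}$ are density matrices on the indicated qubits. $M_2$ is the space of complex $2\times 2$ matrices. *)

(* Defs.v *)
From HB Require Import structures.
From mathcomp Require Import all_boot all_order all_algebra.
Set Implicit Arguments. Unset Strict Implicit. Unset Printing Implicit Defensive.
Import Order.TTheory GRing.Theory Num.Theory.
Local Open Scope ring_scope.
Local Open Scope sesquilinear_scope.

(* Scalars: an arbitrary numClosedFieldType C (e.g. the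
   complex numbers); order on C: 0 <= z means z real and nonnegative. *)

Section QuantumDefs.
Variable C : numClosedFieldType.

Definition psdmx n (A : 'M[C]_n) : Prop :=
  A ^t* = A /\ forall x : 'cV[C]_n, 0 <= (x ^t* *m A *m x) 0 0.

Definition density n (A : 'M[C]_n) : Prop := psdmx A /\ \tr A = 1.

(* Three-qubit basis |a b c> is indexed by 4a + 2b + c in 'I_8
   (qubit 1 is the most significant). *)
Definition q3 (a b c : 'I_2) : 'I_8 := inord (4 * a + 2 * b + c).
Definition bit1 (i : 'I_8) : 'I_2 := inord (i %/ 4).
Definition bit2 (i : 'I_8) : 'I_2 := inord ((i %/ 2) %% 2).
Definition bit3 (i : 'I_8) : 'I_2 := inord (i %% 2).
Definition q2 (a b : 'I_2) : 'I_4 := inord (2 * a + b).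

(* Product operators across the three bipartitions, with the factors
   placed on the indicated qubits:
   prod1_23 A B = A (qubit 1) ⊗ B (qubits 2,3)
   prod2_13 A B = A (qubit 2) ⊗ B (qubits 1,3)
   prod3_12 A B = A (qubit 3) ⊗ B (qubits 1,2) *)
Definition prod1_23 (A : 'M[C]_2) (B : 'M[C]_4) : 'M[C]_8 :=
  \matrix_(i, j) (A (bit1 i) (bit1 j) *
                  B (q2 (bit2 i) (bit3 i)) (q2 (bit2 j) (bit3 j))).
Definition prod2_13 (A : 'M[C]_2) (B : 'M[C]_4) : 'M[C]_8 :=
  \matrix_(i, j) (A (bit2 i) (bit2 j) *
                  B (q2 (bit1 i) (bit3 i)) (q2 (bit1 j) (bit3 j))).
Definition prod3_12 (A : 'M[C]_2) (B : 'M[C]_4) : 'M[C]_8 :=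
  \matrix_(i, j) (A (bit3 i) (bit3 j) *
                  B (q2 (bit1 i) (bit2 i)) (q2 (bit1 j) (bit2 j))).

Definition prod_cut (k : 'I_3) (A : 'M[C]_2) (B : 'M[C]_4) : 'M[C]_8 :=
  if val k == 0%N then prod1_23 A B
  else if val k == 1%N then prod2_13 A B
  else prod3_12 A B.

Definition sep_cut (k : 'I_3) (sigma : 'M[C]_8) : Prop :=
  exists (N : nat) (w : 'I_N -> C) (A : 'I_N -> 'M[C]_2) (B : 'I_N -> 'M[C]_4),
    (forall t, 0 <= w t) /\ \sum_t w t = 1 /\
    (forall t, density (A t)) /\ (forall t, density (B t)) /\
    sigma = \sum_t w t *: prod_cut k (A t) (B t).

Definition biseparable (rho : 'M[C]_8) : Prop :=
  exists (p1 p2 p3 : C) (s1 s2 s3 : 'M[C]_8),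
    0 <= p1 /\ 0 <= p2 /\ 0 <= p3 /\ p1 + p2 + p3 = 1 /\
    sep_cut (inord 0) s1 /\ sep_cut (inord 1) s2 /\ sep_cut (inord 2) s3 /\
    rho = p1 *: s1 + p2 *: s2 + p3 *: s3.

Definition Pmap (X : 'M[C]_2) : 'M[C]_2 :=
  \matrix_(i, j) (if i == j then (X 0 0 + X 1 1) / 2 else X i j).

(* (L ⊗ I ⊗ I), (I ⊗ L ⊗ I), (I ⊗ I ⊗ L) for a linear map L on M_2,
   acting blockwise on the indicated qubit *)
Definition act1 (L : 'M[C]_2 -> 'M[C]_2) (rho : 'M[C]_8) : 'M[C]_8 :=
  \matrix_(i, j) (L (\matrix_(a, b) rho (q3 a (bit2 i) (bit3 i))
                                        (q3 b (bit2 j) (bit3 j))))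
                   (bit1 i) (bit1 j).
Definition act2 (L : 'M[C]_2 -> 'M[C]_2) (rho : 'M[C]_8) : 'M[C]_8 :=
  \matrix_(i, j) (L (\matrix_(a, b) rho (q3 (bit1 i) a (bit3 i))
                                        (q3 (bit1 j) b (bit3 j))))
                   (bit2 i) (bit2 j).
Definition act3 (L : 'M[C]_2 -> 'M[C]_2) (rho : 'M[C]_8) : 'M[C]_8 :=
  \matrix_(i, j) (L (\matrix_(a, b) rho (q3 (bit1 i) (bit2 i) a)
                                        (q3 (bit1 j) (bit2 j) b)))
                   (bit3 i) (bit3 j).

Definition Phi3 (kappa : C) (rho : 'M[C]_8) : 'M[C]_8 :=
  act1 Pmap rho + act2 Pmap rho + act3 Pmap rho + (kappa * \tr rho) *: 1%:M.

End QuantumDefs.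

(* Main.v *)
Require Import Defs.
From HB Require Import structures.
From mathcomp Require Import all_boot all_order all_algebra.
From mathcomp Require Import ring.
Import Order.TTheory GRing.Theory Num.Theory.
Local Open Scope ring_scope.

Module Aux.
Local Open Scope sesquilinear_scope.
Set Implicit Arguments. Unset Strict Implicit.

Lemma I2P (a : 'I_2) : a = 0 \/ a = 1.
Proof. case: a => [[|[|//]] H]; [left|right]; exact: val_inj. Qed.

Ltac bcase a := case: (I2P a) => ->.

Definition c1 (k : 'I_4) : 'I_2 := inord (k %/ 2).
Definition c2 (k : 'I_4) : 'I_2 := inord (k %% 2).

Lemma bit1q a b c : bit1 (q3 a b c) = a.
Proof. by bcase a; bcase b; bcase c; apply/val_inj; rewrite /bit1 /q3 /= !inordK. Qed.
Lemma bit2q a b c : bit2 (q3 a b c) = b.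
Proof. by bcase a; bcase b; bcase c; apply/val_inj; rewrite /bit2 /q3 /= !inordK. Qed.
Lemma bit3q a b c : bit3 (q3 a b c) = c.
Proof. by bcase a; bcase b; bcase c; apply/val_inj; rewrite /bit3 /q3 /= !inordK. Qed.
Lemma c1q a b : c1 (q2 a b) = a.
Proof. by bcase a; bcase b; apply/val_inj; rewrite /c1 /q2 /= !inordK. Qed.
Lemma c2q a b : c2 (q2 a b) = b.
Proof. by bcase a; bcase b; apply/val_inj; rewrite /c2 /q2 /= !inordK. Qed.
Lemma q3K i : q3 (bit1 i) (bit2 i) (bit3 i) = i.
Proof.
apply/val_inj; case: i => [[|[|[|[|[|[|[|[|//]]]]]]]] H]; by rewrite /q3 /bit1 /bit2 /bit3 /= !inordK.
Qed.
Lemma q2K k : q2 (c1 k) (c2 k) = k.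
Proof.
apply/val_inj; case: k => [[|[|[|[|//]]]] H]; by rewrite /q2 /c1 /c2 /= !inordK.
Qed.
Lemma q3_eq a b c a' b' c' : (q3 a b c == q3 a' b' c') = [&& a == a', b == b' & c == c'].
Proof.
apply/idP/idP => [/eqP E|/and3P[/eqP-> /eqP-> /eqP->] //].
move: (congr1 bit1 E) (congr1 bit2 E) (congr1 bit3 E).
by rewrite !bit1q !bit2q !bit3q => -> -> ->; rewrite !eqxx.
Qed.
Lemma q2_eq a b a' b' : (q2 a b == q2 a' b') = (a == a') && (b == b').
Proof.
apply/idP/idP => [/eqP E|/andP[/eqP-> /eqP->] //].
move: (congr1 c1 E) (congr1 c2 E).
by rewrite !c1q !c2q => -> ->; rewrite !eqxx.
Qed.

Section S.
Variable C : numClosedFieldType.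

Lemma sum2 (F : 'I_2 -> C) : \sum_(a < 2) F a = F 0 + F 1.
Proof. rewrite big_ord_recl big_ord1; congr (_ + F _); exact: val_inj. Qed.

Lemma sum4 (F : 'I_4 -> C) : \sum_(k < 4) F k = \sum_(a < 2) \sum_(b < 2) F (q2 a b).
Proof.
rewrite (reindex (fun p : 'I_2 * 'I_2 => q2 p.1 p.2)) /=.
  by rewrite pair_bigA.
exists (fun k => (c1 k, c2 k)) => [[a b] _|k _] /=; first by rewrite c1q c2q.
exact: q2K.
Qed.

Lemma sum8 (F : 'I_8 -> C) : \sum_(i < 8) F i = \sum_(a < 2) \sum_(b < 2) \sum_(c < 2) F (q3 a b c).
Proof.
rewrite (reindex (fun p : ('I_2 * 'I_2) * 'I_2 => q3 p.1.1 p.1.2 p.2)) /=.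
  by rewrite pair_bigA /= pair_bigA.
exists (fun k => ((bit1 k, bit2 k), bit3 k)) => [[[a b] c] _|k _] /=; first by rewrite bit1q bit2q bit3q.
exact: q3K.
Qed.
Lemma adjM m n p (A : 'M[C]_(m, n)) (B : 'M[C]_(n, p)) : (A *m B)^t* = B^t* *m A^t*.
Proof. by rewrite trmx_mul map_mxM. Qed.

Lemma formE n (A : 'M[C]_n) (x : 'cV[C]_n) :
  (x^t* *m A *m x) 0 0 = \sum_i \sum_j (x i 0)^* * A i j * x j 0.
Proof.
rewrite mxE [RHS]exchange_big; apply: eq_bigr => j _; rewrite mxE big_distrl.
by apply: eq_bigr => i _; rewrite !mxE.
Qed.

Lemma psd_conj m n (M : 'M[C]_m) (U : 'M[C]_(m, n)) : psdmx M -> psdmx (U^t* *m M *m U).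
Proof.
case=> HM Hf; split.
  by rewrite adjM adjM trmxCK HM mulmxA.
move=> x; rewrite -!mulmxA mulmxA -adjM mulmxA; exact: Hf.
Qed.

Lemma psd_add n (A B : 'M[C]_n) : psdmx A -> psdmx B -> psdmx (A + B).
Proof.
case=> HA FA [HB FB]; split.
  apply/matrixP => i j; move/matrixP: HA => /(_ i j); move/matrixP: HB => /(_ i j).
  by rewrite !mxE rmorphD => <- <-.
move=> x; rewrite mulmxDr mulmxDl mxE; exact: addr_ge0.
Qed.

Lemma psd_scale n (c : C) (A : 'M[C]_n) : 0 <= c -> psdmx A -> psdmx (c *: A).
Proof.
move=> c0 [HA FA]; split.
  apply/matrixP => i j; rewrite !mxE /= rmorphM /= (geC0_conj c0).
  by move/matrixP: HA => /(_ i j); rewrite !mxE => <-.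
move=> x; rewrite -scalemxAr -scalemxAl mxE; exact: mulr_ge0.
Qed.

Lemma psd0 n : psdmx (0 : 'M[C]_n).
Proof. split; first by apply/matrixP => i j; rewrite !mxE conjC0.
by move=> x; rewrite mulmx0 mul0mx mxE. Qed.

Lemma psd_sum n I (r : seq I) (P : pred I) (F : I -> 'M[C]_n) :
  (forall i, P i -> psdmx (F i)) -> psdmx (\sum_(i <- r | P i) F i).
Proof.
move=> H; elim/big_rec: _ => [|i A Pi HA]; first exact: psd0.
exact: psd_add (H _ Pi) HA.
Qed.

Definition twist m n (s : 'I_n -> 'I_m) (f : 'I_n -> C) (M : 'M[C]_m) : 'M[C]_n :=
  \matrix_(i, j) ((f i)^* * M (s i) (s j) * f j).

Lemma psd_twist m n s f (M : 'M[C]_m) : psdmx M -> psdmx (@twist m n s f M).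
Proof.
move=> /(psd_conj (\matrix_(k, j) ((k == s j)%:R * f j))).
suff -> : twist s f M = (\matrix_(k, j) ((k == s j)%:R * f j))^t* *m M *m
   (\matrix_(k, j) ((k == s j)%:R * f j)) by [].
apply/matrixP => i j; rewrite !mxE (bigD1 (s j)) // big1 => [|l /negbTE nl]; last first.
  by rewrite [X in _ * X]mxE nl mul0r mulr0.
rewrite Monoid.mulm1 [in RHS]mxE eqxx mul1r; congr (_ * _).
rewrite mxE (bigD1 (s i)) // big1 => [|l /negbTE nl]; last by rewrite !mxE nl mul0r conjC0 mul0r.
by rewrite Monoid.mulm1 !mxE eqxx mul1r.
Qed.

Definition bil n (M : 'M[C]_n) (u v : 'cV[C]_n) := (u^t* *m M *m v) 0 0.
Lemma bilE n (A : 'M[C]_n) (x y : 'cV[C]_n) :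
  bil A x y = \sum_i \sum_j (x i 0)^* * A i j * y j 0.
Proof.
rewrite /bil mxE [RHS]exchange_big; apply: eq_bigr => j _; rewrite mxE big_distrl.
by apply: eq_bigr => i _; rewrite !mxE.
Qed.

Definition psd2c (A : 'M[C]_2) := A^t* = A /\ 0 <= A 0 0 /\ 0 <= A 1 1 /\
  A 0 1 * (A 0 1)^* <= A 0 0 * A 1 1.

Lemma hermE n (A : 'M[C]_n) : A^t* = A -> forall i j, (A j i)^* = A i j.
Proof. by move/matrixP => H i j; move: (H i j); rewrite !mxE. Qed.

Lemma prod1_23_form (A : 'M[C]_2) (M : 'M[C]_4) (x : 'cV[C]_8) :
  let u0 := \col_k x (q3 0 (c1 k) (c2 k)) 0 in
  let u1 := \col_k x (q3 1 (c1 k) (c2 k)) 0 in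
  (x^t* *m prod1_23 A M *m x) 0 0 =
  A 0 0 * bil M u0 u0 + A 0 1 * bil M u0 u1 + A 1 0 * bil M u1 u0 + A 1 1 * bil M u1 u1.
Proof.
move=> u0 u1; rewrite formE !bilE !sum8 !sum4.
rewrite !sum2 ?sum8 ?sum4 !sum2 !mxE !bit1q !bit2q !bit3q !c1q !c2q.
ring.
Qed.

Lemma bil_comb (M : 'M[C]_4) (u v : 'cV[C]_4) (a b : C) :
  bil M (a *: u + b *: v) (a *: u + b *: v) =
  a^* * a * bil M u u + a^* * b * bil M u v + b^* * a * bil M v u + b^* * b * bil M v v.
Proof.
rewrite !bilE !sum4 !sum2 !sum4 !sum2 !mxE.
rewrite !rmorphD !rmorphM /=.
ring.
Qed.

Lemma psd_prod1_23 (A : 'M[C]_2) (M : 'M[C]_4) :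
  psd2c A -> psdmx M -> psdmx (prod1_23 A M).
Proof.
move=> [HA [a0 [d0 bd]]] [HM FM]; split.
  apply/matrixP => i j; rewrite !mxE rmorphM /=.
  by rewrite (hermE HA) (hermE HM).
move=> x; rewrite prod1_23_form.
set u0 := \col_k _; set u1 := \col_k _.
have ba : A 1 0 = (A 0 1)^* by rewrite (hermE HA).
have F0 : forall u, 0 <= bil M u u by move=> u; exact: FM.
move: a0; rewrite le0r => /orP[/eqP a0|apos].
  have b0 : A 0 1 = 0.
    have : A 0 1 * (A 0 1)^* <= 0 by rewrite a0 mul0r in bd.
    have : 0 <= A 0 1 * (A 0 1)^* by rewrite -normCK exprn_ge0.
    move=> h1 h2; have /eqP : A 0 1 * (A 0 1)^* = 0 by apply/le_anti; rewrite h1 h2.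
    by rewrite mulf_eq0 conjC_eq0 orbb => /eqP.
  rewrite ba b0 a0 conjC0 !mul0r !add0r; exact: mulr_ge0.
have key : A 0 0 * (A 0 0 * bil M u0 u0 + A 0 1 * bil M u0 u1 + A 1 0 * bil M u1 u0 + A 1 1 * bil M u1 u1)
  = bil M (A 0 0 *: u0 + A 0 1 *: u1) (A 0 0 *: u0 + A 0 1 *: u1) + (A 0 0 * A 1 1 - A 0 1 * (A 0 1)^*) * bil M u1 u1.
  rewrite bil_comb ba (geC0_conj (ltW apos)); ring.
have : 0 <= A 0 0 * (A 0 0 * bil M u0 u0 + A 0 1 * bil M u0 u1 + A 1 0 * bil M u1 u0 + A 1 1 * bil M u1 u1).
  by rewrite key addr_ge0 // mulr_ge0 // subr_ge0.
by rewrite pmulr_rge0.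
Qed.

Definition neg (a : 'I_2) : 'I_2 := if a == 0 then 1 else 0.
Definition sgn (a : 'I_2) : C := if a == 0 then 1 else -1.
Definition sig1 (k : 'I_4) := q2 (neg (c1 k)) (c2 k).
Definition sig2 (k : 'I_4) := q2 (c1 k) (neg (c2 k)).
Definition Qm (s : 'I_4 -> 'I_4) (c : 'I_4 -> 'I_2) (B : 'M[C]_4) : 'M[C]_4 :=
  (3/4) *: B + (1/4) *: twist s (fun _ => 1) B + (1/4) *: twist s (fun k => sgn (c k)) B.
Definition Zm (c : 'I_4 -> 'I_2) (B : 'M[C]_4) : 'M[C]_4 := twist id (fun k => sgn (c k)) B.

Definition Rdec (P : 'M[C]_2 -> 'M[C]_4 -> 'M[C]_8) (A : 'M[C]_2) (B : 'M[C]_4) :=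
  P (Pmap A) B + P A (Qm sig1 c1 B) + P A (Qm sig2 c2 B)
  + (1/4) *: (P (1%:M - A) (Zm c1 B) + P 1%:M (Zm c1 (1%:M - B)))
  + (1/4) *: (P (1%:M - A) (Zm c2 B) + P 1%:M (Zm c2 (1%:M - B))).

Lemma tr_prod1 (A : 'M[C]_2) (B : 'M[C]_4) : \tr (prod1_23 A B) = \tr A * \tr B.
Proof.
rewrite /mxtrace !sum8 !sum4 !sum2 !mxE !bit1q !bit2q !bit3q; ring.
Qed.

Lemma decomp1 (A : 'M[C]_2) (B : 'M[C]_4) : \tr A = 1 -> \tr B = 1 ->
  Phi3 (1/2) (prod1_23 A B) = Rdec (@prod1_23 C) A B.
Proof.
move=> tA tB; rewrite /Phi3 tr_prod1 tA tB mulr1.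
apply/matrixP => i j; rewrite -(q3K i) -(q3K j).
rewrite /Rdec /Qm /Zm !mxE !bit1q !bit2q !bit3q /sig1 /sig2 ?mxE ?c1q ?c2q ?q3_eq ?q2_eq.
case: (I2P (bit1 i)) => ->; case: (I2P (bit1 j)) => ->;
case: (I2P (bit2 i)) => ->; case: (I2P (bit2 j)) => ->;
case: (I2P (bit3 i)) => ->; case: (I2P (bit3 j)) => ->;
rewrite /neg /sgn ?eqxx /= ?rmorphN ?rmorph1 /=; field; by rewrite ?pnatr_eq0.
Qed.

Lemma tr_prod2 (A : 'M[C]_2) (B : 'M[C]_4) : \tr (prod2_13 A B) = \tr A * \tr B.
Proof.
rewrite /mxtrace !sum8 !sum4 !sum2 !mxE !bit1q !bit2q !bit3q; ring.
Qed.

Lemma decomp2 (A : 'M[C]_2) (B : 'M[C]_4) : \tr A = 1 -> \tr B = 1 ->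
  Phi3 (1/2) (prod2_13 A B) = Rdec (@prod2_13 C) A B.
Proof.
move=> tA tB; rewrite /Phi3 tr_prod2 tA tB mulr1.
apply/matrixP => i j; rewrite -(q3K i) -(q3K j).
rewrite /Rdec /Qm /Zm !mxE !bit1q !bit2q !bit3q /sig1 /sig2 ?mxE ?c1q ?c2q ?q3_eq ?q2_eq.
case: (I2P (bit1 i)) => ->; case: (I2P (bit1 j)) => ->;
case: (I2P (bit2 i)) => ->; case: (I2P (bit2 j)) => ->;
case: (I2P (bit3 i)) => ->; case: (I2P (bit3 j)) => ->;
rewrite /neg /sgn ?eqxx /= ?rmorphN ?rmorph1 /=; field; by rewrite ?pnatr_eq0.
Qed.

Lemma tr_prod3 (A : 'M[C]_2) (B : 'M[C]_4) : \tr (prod3_12 A B) = \tr A * \tr B.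
Proof.
rewrite /mxtrace !sum8 !sum4 !sum2 !mxE !bit1q !bit2q !bit3q; ring.
Qed.

Lemma decomp3 (A : 'M[C]_2) (B : 'M[C]_4) : \tr A = 1 -> \tr B = 1 ->
  Phi3 (1/2) (prod3_12 A B) = Rdec (@prod3_12 C) A B.
Proof.
move=> tA tB; rewrite /Phi3 tr_prod3 tA tB mulr1.
apply/matrixP => i j; rewrite -(q3K i) -(q3K j).
rewrite /Rdec /Qm /Zm !mxE !bit1q !bit2q !bit3q /sig1 /sig2 ?mxE ?c1q ?c2q ?q3_eq ?q2_eq.
case: (I2P (bit1 i)) => ->; case: (I2P (bit1 j)) => ->;
case: (I2P (bit2 i)) => ->; case: (I2P (bit2 j)) => ->;
case: (I2P (bit3 i)) => ->; case: (I2P (bit3 j)) => ->;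
rewrite /neg /sgn ?eqxx /= ?rmorphN ?rmorph1 /=; field; by rewrite ?pnatr_eq0.
Qed.

End S.


Section S4.
Variable C : numClosedFieldType.

Definition v2 (x0 x1 : C) : 'cV[C]_2 := \col_k (if k == 0 then x0 else x1).

Lemma form2 (A : 'M[C]_2) x0 x1 : ((v2 x0 x1)^t* *m A *m v2 x0 x1) 0 0 =
  x0^* * A 0 0 * x0 + x0^* * A 0 1 * x1 + x1^* * A 1 0 * x0 + x1^* * A 1 1 * x1.
Proof. rewrite formE !sum2 !mxE /=; ring. Qed.

Lemma nn_ge0 (b : C) : 0 <= b * b^*.
Proof. by rewrite -normCK exprn_ge0. Qed.

Lemma psd2c_of (A : 'M[C]_2) : psdmx A -> psd2c A.
Proof.
case=> HA FA.
have ba : A 1 0 = (A 0 1)^* by rewrite (hermE HA).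
have a0 : 0 <= A 0 0.
  have E : ((v2 1 0)^t* *m A *m v2 1 0) 0 0 = A 0 0 by rewrite form2 rmorph1 rmorph0; ring.
  by rewrite -E.
have d0 : 0 <= A 1 1.
  have E : ((v2 0 1)^t* *m A *m v2 0 1) 0 0 = A 1 1 by rewrite form2 rmorph1 rmorph0; ring.
  by rewrite -E.
split=> //; split=> //; split=> //.
set a := A 0 0 in a0 *; set d := A 1 1 in d0 *; set b := A 0 1 in ba *.
move: (d0); rewrite le0r => /orP[/eqP dz|dpos].
  have nr : (b * b^*)^* = b * b^* by rewrite rmorphM /= conjCK mulrC.
  move: (FA (v2 (b * b^*) (- ((a + 1) * b^*)))); rewrite form2 -/a -/b -/d ba nr dz.
  rewrite !rmorphN !rmorphM !rmorphD /= conjCK rmorph1 (geC0_conj a0).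
  have -> : (b * b^*) * a * (b * b^*) + (b * b^*) * b * - ((a + 1) * b^*) + - ((a + 1) * b) * b^* * (b * b^*) +
     - ((a + 1) * b) * 0 * - ((a + 1) * b^*) = - ((a + 2) * ((b * b^*) * (b * b^*))) by ring.
  set n := b * b^*.
  rewrite oppr_ge0 => h.
  have h2 : 0 <= (a + 2) * (n * n).
    apply: mulr_ge0; first by apply: addr_ge0 => //; exact: ler0n.
    by apply: mulr_ge0; exact: nn_ge0.
  have h3 : (a + 2) * (n * n) = 0 by apply/le_anti; rewrite h h2.
  have a2 : a + 2 != 0 by rewrite gt_eqF // ltr_wpDl.
  move: h3 => /eqP; rewrite mulf_eq0 (negbTE a2) /= mulf_eq0 orbb => /eqP ->.
  by rewrite mulr0.
move: (FA (v2 d (- b^*))); rewrite form2 -/a -/b -/d ba.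
rewrite !rmorphN /= conjCK (geC0_conj d0).
have -> : d * a * d + d * b * - b^* + - b * b^* * d + - b * d * - b^* = d * (a * d - b * b^*) by ring.
by rewrite pmulr_rge0 // subr_ge0.
Qed.

Lemma mxCE m n (A : 'M[C]_(m, n)) i j : (A^t*) i j = (A j i)^*.
Proof. by rewrite !mxE. Qed.

Lemma conj_real (x : C) : 0 <= x -> x^* = x. Proof. exact: geC0_conj. Qed.

Lemma psd2c_Pmap (A : 'M[C]_2) : psd2c A -> psd2c (Pmap A).
Proof.
case=> HA [a0 [d0 bd]].
have ba : A 1 0 = (A 0 1)^* by rewrite (hermE HA).
have ra := conj_real a0; have rd := conj_real d0.
have m0 : 0 <= (A 0 0 + A 1 1) / 2 by rewrite divr_ge0 // addr_ge0.
split.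
  apply/matrixP => i j; rewrite mxCE /Pmap !mxE eq_sym.
  case: eqP => _; last exact: (hermE HA).
  exact: conj_real.
rewrite /Pmap !mxE /=.
split=> //; split=> //.
apply: (le_trans bd); rewrite -subr_ge0.
have -> : (A 0 0 + A 1 1) / 2 * ((A 0 0 + A 1 1) / 2) - A 0 0 * A 1 1 =
  ((A 0 0 - A 1 1) / 2) * ((A 0 0 - A 1 1) / 2)^*.
  rewrite rmorphM rmorphB fmorphV /= ra rd rmorph_nat; field.
  by rewrite ?pnatr_eq0.
exact: nn_ge0.
Qed.

Lemma psd2c_1m (A : 'M[C]_2) : psd2c A -> \tr A = 1 -> psd2c (1%:M - A).
Proof.
case=> HA [a0 [d0 bd]] tA.
have ba : A 1 0 = (A 0 1)^* by rewrite (hermE HA).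
have ra := conj_real a0; have rd := conj_real d0.
have tA' : A 0 0 + A 1 1 = 1 by rewrite -tA /mxtrace sum2.
split.
  apply/matrixP => i j; rewrite mxCE !mxE rmorphB /= (hermE HA) eq_sym.
  by case: (i == j); rewrite /= ?rmorph1 ?rmorph0.
rewrite !mxE /=.
have -> : 1 - A 0 0 = A 1 1 by rewrite -tA'; ring.
have -> : 1 - A 1 1 = A 0 0 by rewrite -tA'; ring.
split=> //; split=> //.
by rewrite sub0r rmorphN mulrNN [A 1 1 * _]mulrC.
Qed.

Lemma psd2c_1 : psd2c (1%:M : 'M[C]_2).
Proof.
split.
  apply/matrixP => i j; rewrite mxCE !mxE eq_sym.
  by case: (i == j); rewrite /= ?rmorph1 ?rmorph0.
by rewrite !mxE /= mul0r mul1r ler01.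
Qed.

Definition vv (x : 'cV[C]_4) (p q : 'I_4) : 'cV[C]_4 :=
  \col_k (if k == p then (x q 0)^* else if k == q then - (x p 0)^* else 0).

Lemma cN (z : C) : (- z^*)^* = - z.
Proof. by rewrite rmorphN /= conjCK. Qed.

Lemma L2_identity (B : 'M[C]_4) (x : 'cV[C]_4) :
  bil (\tr B *: 1%:M - B) x x =
  bil B (vv x (q2 0 0) (q2 0 1)) (vv x (q2 0 0) (q2 0 1)) +
  bil B (vv x (q2 0 0) (q2 1 0)) (vv x (q2 0 0) (q2 1 0)) +
  bil B (vv x (q2 0 0) (q2 1 1)) (vv x (q2 0 0) (q2 1 1)) +
  bil B (vv x (q2 0 1) (q2 1 0)) (vv x (q2 0 1) (q2 1 0)) +
  bil B (vv x (q2 0 1) (q2 1 1)) (vv x (q2 0 1) (q2 1 1)) +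
  bil B (vv x (q2 1 0) (q2 1 1)) (vv x (q2 1 0) (q2 1 1)).
Proof.
rewrite /mxtrace !bilE !sum4 !sum2 !sum4 !sum2 !mxE !q2_eq ?eqxx /=.
rewrite ?cN ?conjCK ?rmorph0.
ring.
Qed.

Lemma psd_1m4 (B : 'M[C]_4) : psdmx B -> \tr B = 1 -> psdmx (1%:M - B).
Proof.
case=> HB FB tB; split.
  apply/matrixP => i j; rewrite mxCE !mxE rmorphB /= (hermE HB) eq_sym.
  by case: (i == j); rewrite /= ?rmorph1 ?rmorph0.
move=> x; have -> : (1%:M - B : 'M[C]_4) = \tr B *: 1%:M - B by rewrite tB scale1r.
rewrite -/(bil _ x x) L2_identity.
by rewrite !addr_ge0 //; apply: FB.
Qed.

End S4.


Section S5.
Variable C : numClosedFieldType.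

Lemma quarter_ge0 : 0 <= 1 / 4 :> C.
Proof. by rewrite divr_ge0 // ler0n. Qed.

Lemma psd_Qm s c (B : 'M[C]_4) : psdmx B -> psdmx (Qm s c B).
Proof.
move=> HB; rewrite /Qm.
apply: psd_add; [apply: psd_add|]; apply: psd_scale; rewrite ?quarter_ge0 //; try exact: psd_twist.
by rewrite divr_ge0 // ler0n.
Qed.

Lemma psd_Zm c (B : 'M[C]_4) : psdmx B -> psdmx (Zm c B).
Proof. exact: psd_twist. Qed.

Definition sw12 (i : 'I_8) := q3 (bit2 i) (bit1 i) (bit3 i).
Definition cyc (i : 'I_8) := q3 (bit3 i) (bit1 i) (bit2 i).

Lemma prod2_tw (A : 'M[C]_2) (M : 'M[C]_4) :
  prod2_13 A M = twist sw12 (fun _ => 1) (prod1_23 A M).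
Proof.
by apply/matrixP => i j; rewrite !mxE /sw12 !bit1q !bit2q !bit3q rmorph1 mul1r mulr1.
Qed.

Lemma prod3_tw (A : 'M[C]_2) (M : 'M[C]_4) :
  prod3_12 A M = twist cyc (fun _ => 1) (prod1_23 A M).
Proof.
by apply/matrixP => i j; rewrite !mxE /cyc !bit1q !bit2q !bit3q rmorph1 mul1r mulr1.
Qed.

Lemma psd_RHS (P : 'M[C]_2 -> 'M[C]_4 -> 'M[C]_8) (A : 'M[C]_2) (B : 'M[C]_4) :
  (forall (X : 'M[C]_2) (M : 'M[C]_4), psd2c X -> psdmx M -> psdmx (P X M)) ->
  density A -> density B -> psdmx (Rdec P A B).
Proof.
move=> HP [pA tA] [pB tB].
have cA := psd2c_of pA.
have pB1 := psd_1m4 pB tB.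
rewrite /Rdec.
repeat apply: psd_add; try (apply: psd_scale; first exact: quarter_ge0; apply: psd_add);
  apply: HP; first [exact: psd2c_Pmap | exact: psd2c_1m | exact: psd2c_1 | exact: psd_Qm | exact: psd_Zm | assumption].
Qed.

Lemma Phi3D k (X Y : 'M[C]_8) : Phi3 k (X + Y) = Phi3 k X + Phi3 k Y.
Proof.
apply/matrixP => i j; rewrite /Phi3 /act1 /act2 /act3 /Pmap mxtraceD !mxE.
by case: eqP => _; case: eqP => _; case: eqP => _; ring.
Qed.

Lemma Phi3Z k a (X : 'M[C]_8) : Phi3 k (a *: X) = a *: Phi3 k X.
Proof.
apply/matrixP => i j; rewrite /Phi3 /act1 /act2 /act3 /Pmap mxtraceZ !mxE.
by case: eqP => _; case: eqP => _; case: eqP => _; ring.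
Qed.

Lemma Phi30 k : Phi3 k (0 : 'M[C]_8) = 0.
Proof. by have := Phi3Z k 0 0; rewrite !scale0r. Qed.
Lemma Phi3_sum k N (F : 'I_N -> 'M[C]_8) : Phi3 k (\sum_t F t) = \sum_t Phi3 k (F t).
Proof. exact: (big_morph (Phi3 k) (Phi3D k) (Phi30 k)). Qed.

Lemma psd_cut (k : 'I_3) (A : 'M[C]_2) (B : 'M[C]_4) :
  density A -> density B -> psdmx (Phi3 (1/2) (prod_cut k A B)).
Proof.
move=> dA dB; have [_ tA] := dA; have [_ tB] := dB.
rewrite /prod_cut; case: ifP => _; [|case: ifP => _].
- rewrite decomp1 //; apply: psd_RHS => // X M hX hM; exact: psd_prod1_23.
- rewrite decomp2 //; apply: psd_RHS => // X M hX hM.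
  rewrite prod2_tw; apply: psd_twist; exact: psd_prod1_23.
- rewrite decomp3 //; apply: psd_RHS => // X M hX hM.
  rewrite prod3_tw; apply: psd_twist; exact: psd_prod1_23.
Qed.

Lemma psd_sep (k : 'I_3) (s : 'M[C]_8) : sep_cut k s -> psdmx (Phi3 (1/2) s).
Proof.
move=> [N [w [A [B [w0 [_ [dA [dB ->]]]]]]]].
rewrite Phi3_sum; apply: psd_sum => t _; rewrite Phi3Z.
apply: psd_scale => //; exact: psd_cut.
Qed.

End S5.


End Aux.
Import Aux.
Unset Implicit Arguments.

Theorem theorem1 (C : numClosedFieldType) (rho : 'M[C]_8) :
  biseparable rho -> psdmx (Phi3 (1 / 2) rho).
Proof.
move=> [p1 [p2 [p3 [s1 [s2 [s3 [h1 [h2 [h3 [_ [c1 [c2 [c3 ->]]]]]]]]]]]]].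
rewrite !Phi3D !Phi3Z.
apply: psd_add; [apply: psd_add|]; apply: psd_scale => //; exact: psd_sep c1 || exact: psd_sep c2 || exact: psd_sep c3.
Qed.
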